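(* In the planted $k$-factor model with $p=\lambda/n$, assume $k\lambda\ge 1+\epsilon$ for some constant $\epsilon>0$. Then for every $\delta>0$ and every realization of $H^*$, $$\mathbb P\Big(|\mathcal H_{\rm good}(G)|\le \tfrac{k\lambda}{k\lambda-1}(k\lambda)^{\delta n}\ \Big|\ H^*\Big)\ge 1-(k\lambda)^{-\delta n/2}.$$
   Context: Planted $k$-factor model: fix an integer $k\ge1$ and $n$ with $kn$ even. A $k$-factor on $[n]$ is a $k$-regular simple graph with vertex set $[n]$, identified with its edge set; $\mathcal H$ is the set of all $k$-factors on $[n]$. Let $p=\lambda/n\in[0,1]$. Draw $H^*$ uniformly at random from $\mathcal H$ and, independently, $G_0\sim\mathcal G(n,p)$. The observed graph is $G=G_0\cup H^*$. For $H\in\mathcal H$, $\ell(H,H^* )=|H\triangle H^*|/(kn/2)$. For $\delta>0$, $\mathcal H_{\rm good}(G)=\{H\in\mathcal H:\ \ell(H,H^* )<2\delta/k,\ H\subseteq E(G)\}$. *)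

(* Defs.v *)
From HB Require Import structures.
From mathcomp Require Import all_boot all_order all_algebra.
From mathcomp Require Import boolp classical_sets reals exp.
Set Implicit Arguments. Unset Strict Implicit. Unset Printing Implicit Defensive.
Import Order.TTheory GRing.Theory Num.Theory.
Local Open Scope ring_scope.

(* Vertex set [n] is 'I_n; an edge is a 2-element subset of 'I_n;
   a (simple) graph is identified with its edge set, a {set {set 'I_n}}. *)
Definition pairs (n : nat) : {set {set 'I_n}} := [set e : {set 'I_n} | #|e| == 2%N].

Definition is_kfactor (n k : nat) (H : {set {set 'I_n}}) : bool :=
  (H \subset pairs n) && [forall v : 'I_n, #|[set e in H | v \in e]| == k].

Definition loss (R : realType) (n k : nat) (H Hs : {set {set 'I_n}}) : R :=
  (#|(H :\: Hs) :|: (Hs :\: H)|)%:R / ((k * n)%:R / 2).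

Definition Hgood (R : realType) (n k : nat) (delta : R) (Hs G : {set {set 'I_n}})
  : {set {set {set 'I_n}}} :=
  [set H : {set {set 'I_n}} | [&& @is_kfactor n k H,
     @loss R n k H Hs < 2 * delta / k%:R & H \subset G]].

(* Probability of the event P under G0 ~ G(n,p): each of the C(n,2) potential
   edges is present independently with probability p. *)
Definition Pr_Gnp (R : realType) (n : nat) (p : R) (P : pred {set {set 'I_n}}) : R :=
  \sum_(F : {set {set 'I_n}} | (F \subset pairs n) && P F)
     p ^+ #|F| * (1 - p) ^+ (#|pairs n| - #|F|).

(* Main.v *)
Require Import Defs.
From HB Require Import structures.
From mathcomp Require Import all_boot all_order all_algebra.
From mathcomp Require Import boolp classical_sets reals exp.
From mathcomp Require Import ring lra.
Import Order.TTheory GRing.Theory Num.Theory.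

Set Implicit Arguments. Unset Strict Implicit. Unset Printing Implicit Defensive.

Lemma card_fiber (T U : finType) (X : {set T}) (D : {set U}) (f : T -> U) :
  (forall x, x \in X -> f x \in D) ->
  #|X| = \sum_(u in D) #|[set x in X | f x == u]|.
Proof.
move=> fD; rewrite -sum1_card (partition_big f (mem D)) //=.
by apply: eq_bigr => u _; rewrite -sum1_card; apply: eq_bigl => x; rewrite inE.
Qed.

Definition deg n (A : {set {set 'I_n}}) (v : 'I_n) := #|[set e in A | v \in e]|.

Lemma deg_split n (A B : {set {set 'I_n}}) v :
  deg A v = deg (A :&: B) v + deg (A :\: B) v.
Proof.
rewrite /deg -(cardsID B [set e in A | v \in e]); congr (_ + _);
  apply: eq_card => e; rewrite !inE;
  by case: (e \in A); case: (e \in B); case: (v \in e).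
Qed.

Lemma degE n (A : {set {set 'I_n}}) v : deg A v = \sum_(e in A) (v \in e : nat).
Proof.
rewrite /deg -sum1_card [LHS]big_mkcond [RHS]big_mkcond /=.
by apply: eq_bigr => e _; rewrite inE; case: (e \in A); case: (v \in e).
Qed.

Lemma handshake n (A : {set {set 'I_n}}) :
  A \subset pairs n -> \sum_v deg A v = 2 * #|A|.
Proof.
move=> sA; under eq_bigr do rewrite degE.
rewrite exchange_big /= mulnC -sum_nat_const; apply: eq_bigr => e eA.
have := fintype.subsetP sA e eA; rewrite inE => /eqP <-.
rewrite -sum1_card [RHS]big_mkcond /=; apply: eq_bigr => v _; by case: (v \in e).
Qed.

Fixpoint bb (s : nat) : nat :=
  match s with
  | s'.+2 => s'.+1 * bb s'
  | _ => 1
  end.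

Lemma bbS s : (s - 1) * bb (s - 2) <= bb s.
Proof.
case: s => [|[|s]] //.
have -> : (s.+2 - 1 = s.+1)%N by rewrite subSS subn0.
have -> : (s.+2 - 2 = s)%N by rewrite !subSS subn0.
by [].
Qed.

Definition Sdeg n (d : 'I_n -> nat) : {set {set {set 'I_n}}} :=
  [set B : {set {set 'I_n}} | (B \subset pairs n) && [forall v, deg B v == d v]].

Lemma deg_pos_edge n (B : {set {set 'I_n}}) v :
  0 < deg B v -> exists2 e, e \in B & v \in e.
Proof. rewrite /deg card_gt0 => /set0Pn [e]; rewrite inE => /andP[]; eauto. Qed.

Lemma pair_of n (e : {set 'I_n}) v : e \in pairs n -> v \in e ->
  exists w, w != v /\ e = [set v; w].
Proof.
rewrite inE => /cards2P [x [y [xy ->]]]; rewrite !inE => /orP[] /eqP ->.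
- by exists y; split; [rewrite eq_sym|].
- by exists x; split => //; rewrite finset.setUC.
Qed.

Lemma deg_del n (B : {set {set 'I_n}}) e u : e \in B ->
  deg (B :\ e) u = deg B u - (u \in e).
Proof.
move=> eB; rewrite (deg_split B [set e] u).
have -> : B :&: [set e] = [set e].
  by apply/setP => x; rewrite !inE; case: eqP => [->|]; rewrite ?eB ?andbT ?andbF.
suff -> : deg [set e] u = (u \in e) by rewrite addKn.
rewrite /deg; case ue: (u \in e).
  by rewrite (_ : [set x in [set e] | u \in x] = [set e]) ?cards1 //;
     apply/setP => x; rewrite !inE; case: eqP => [->|]; rewrite ?ue ?andbF.
by rewrite (_ : [set x in [set e] | u \in x] = finset.set0) ?cards0 //;
   apply/setP => x; rewrite !inE; case: eqP => [->|]; rewrite ?ue ?andbF.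
Qed.

Lemma Sdeg_bound n : forall s (d : 'I_n -> nat),
  \sum_v d v = s -> #|Sdeg d| <= bb s.
Proof.
elim/ltn_ind => s IH d sd.
have [sd0|spos] := posnP s.
  have d0 : forall v, d v = 0.
    move=> v; apply/eqP; move: sd0; rewrite -sd => /eqP.
    by rewrite sum_nat_eq0 => /forallP /(_ v) /implyP; apply.
  rewrite sd0 /=.
  apply: (@leq_trans #|[set (finset.set0 : {set {set 'I_n}})]|); last by rewrite cards1.
  apply: subset_leq_card; apply/fintype.subsetP => B; rewrite !inE => /andP[sB /forallP dB].
  apply/eqP/setP => e; rewrite inE; apply/negbTE/negP => eB.
  have := fintype.subsetP sB e eB; rewrite inE => /eqP e2.
  have [v ve]: exists v, v \in e by apply/set0Pn; rewrite -card_gt0 e2.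
  have := dB v; rewrite d0 /deg cards_eq0 => /eqP/setP/(_ e).
  by rewrite !inE eB ve.
case: (pickP (fun v => 0 < d v)) => [v dv|none]; last first.
  move: spos; rewrite -sd big1 // => v _; move: (none v) => /negbT.
  by rewrite lt0n negbK => /eqP.
pose W := [set w | (w != v) && (0 < d w)].
pose f (B : {set {set 'I_n}}) := odflt v [pick w | [set v; w] \in B].
have fD : forall B, B \in Sdeg d -> f B \in W.
  move=> B; rewrite inE => /andP[sB /forallP dB].
  have : 0 < deg B v by rewrite (eqP (dB v)).
  case/deg_pos_edge => e eB ve.
  have [w [wv ew]] := pair_of (fintype.subsetP sB e eB) ve.
  rewrite /f; case: pickP => [w' ew'|none]; last by move: (none w); rewrite -ew eB.
  rewrite inE /=; apply/andP; split.
    apply/negP => /eqP ewv; move: (fintype.subsetP sB _ ew'); rewrite ewv inE.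
    by rewrite finset.setUid cards1.
  rewrite -(eqP (dB w')) /deg card_gt0; apply/set0Pn; exists [set v; w'].
  by rewrite !inE ew' eqxx orbT.
rewrite (card_fiber fD).
pose d' (w : 'I_n) (u : 'I_n) := d u - (u == v) - (u == w).
have fib : forall w, w \in W ->
    #|[set B in Sdeg d | f B == w]| <= bb (s - 2).
  move=> w; rewrite inE => /andP[wv dw].
  have sd' : (\sum_u d' w u = s - 2)%N.
    rewrite -sd.
    have -> : (\sum_u d u = \sum_u (d' w u + ((u == v) + (u == w))))%N.
      apply: eq_bigr => u _; rewrite /d'.
      have [->|uv] := eqVneq u v.
        by rewrite ?eqxx eq_sym (negbTE wv) subn0 addn0 subn1 addn1 prednK.
      have [->|uw] := eqVneq u w.
        by rewrite ?eqxx subn0 subn1 add0n addn1 prednK.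
      by change (d u = d u - 0 - 0 + (0 + 0))%N; rewrite !subn0 add0n addn0.
    rewrite big_split /= big_split /=.
    have s1 : forall z : 'I_n, (\sum_u (u == z) = 1)%N.
      move=> z; rewrite (bigD1 z) //= eqxx big1 ?addn0 // => u /negbTE -> //.
    by rewrite !s1 addnK.
  have lts : (s - 2 < s)%N by rewrite ltn_subrL.
  apply: (@leq_trans #|Sdeg (d' w)|); last exact: (IH _ lts _ sd').
  have injD : {in [set B in Sdeg d | f B == w] &, injective (fun B => B :\ [set v; w])}.
    move=> B1 B2; rewrite !inE => /andP[_ f1] /andP[_ f2] eq12.
    have memB : forall B, f B == w -> [set v; w] \in B.
      move=> B; rewrite /f; case: pickP => [w' ew' /eqP <- //|_ /= /eqP wv'].
      by move: wv; rewrite wv' eqxx.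
    by rewrite -(finset.setD1K (memB _ f1)) -(finset.setD1K (memB _ f2)) eq12.
  rewrite -(card_in_imset injD); apply: subset_leq_card.
  apply/fintype.subsetP => _ /imsetP [B BS ->]; move: BS; rewrite !inE.
  case/andP => /andP[sB /forallP dB] fB.
  have evw : [set v; w] \in B.
    move: fB; rewrite /f; case: pickP => [w' ew' /eqP <- //|_ /= /eqP wv'].
    by move: wv; rewrite wv' eqxx.
  apply/andP; split.
    by apply: fintype.subset_trans sB; apply: subD1set.
  apply/forallP => u; rewrite deg_del // (eqP (dB u)) /d' !inE.
  have [->|uv] := eqVneq u v.
    by rewrite [v == w]eq_sym (negbTE wv) /= subn0.
  have [->|uw] := eqVneq u w; first by rewrite /= subn0.
  by rewrite /= !subn0.
apply: (@leq_trans (\sum_(w in W) bb (s - 2))); first exact: leq_sum.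
rewrite sum_nat_const; apply: leq_trans (bbS s); rewrite leq_mul2r; apply/orP; right.
have -> : #|W| = \sum_(w in W) 1 by rewrite sum1_card.
apply: (@leq_trans (\sum_(w in W) d w)).
  by apply: leq_sum => w; rewrite inE => /andP[].
apply: (@leq_trans (\sum_(w | w != v) d w)).
  rewrite [X in (X <= _)%N]big_mkcond [X in (_ <= X)%N]big_mkcond /=.
  apply: leq_sum => w _; rewrite inE; case: (w != v) => //=; by case: (0 < d w).
have h : (d v + \sum_(w | w != v) d w = s)%N by rewrite -sd [in RHS](bigD1 v).
by rewrite -h addnC -addnBA // leq_addr.
Qed.

Lemma bb_fact m : bb (2 * m) <= 2 ^ m * m`!.
Proof.
elim: m => [//|m IH].
rewrite (_ : (2 * m.+1 = (2 * m).+2)%N); last by rewrite mulnS.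
rewrite /= factS expnS.
have -> : (2 * 2 ^ m * (m.+1 * m`!) = (2 * m.+1) * (2 ^ m * m`!))%N.
  by rewrite mulnCA !mulnA [2 * m.+1]mulnC.
apply: leq_mul => //.
by rewrite mulnS ltnS leqnSn.
Qed.

Lemma ffact_le a m : a ^_ m <= a ^ m.
Proof.
rewrite ffact_prod (_ : a ^ m = \prod_(i < m) a).
  by apply: leq_prod => i _; apply: leq_subr.
by rewrite prod_nat_const card_ord.
Qed.

Lemma bin_bb a m : 'C(a, m) * bb (2 * m) <= (2 * a) ^ m.
Proof.
rewrite -(@leq_pmul2r m`!) ?fact_gt0 //.
apply: (@leq_trans ('C(a, m) * (2 ^ m * m`!) * m`!)).
  by rewrite leq_mul2r leq_mul2l bb_fact !orbT.
rewrite leq_mul2r; apply/orP; right.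
by rewrite mulnCA bin_ffact expnMn leq_mul2l ffact_le orbT.
Qed.

Lemma kfactor_sub n k (H : {set {set 'I_n}}) : @is_kfactor n k H -> H \subset pairs n.
Proof. by case/andP. Qed.

Lemma kfactor_deg n k (H : {set {set 'I_n}}) v : @is_kfactor n k H -> deg H v = k.
Proof. by case/andP => _ /forallP /(_ v) /eqP. Qed.

Lemma deg_diff_eq n k (H Hs : {set {set 'I_n}}) :
  @is_kfactor n k H -> @is_kfactor n k Hs ->
  forall v, deg (Hs :\: H) v = deg (H :\: Hs) v.
Proof.
move=> kH kHs v; have := deg_split H Hs v; have := deg_split Hs H v.
rewrite !(kfactor_deg v kH) !(kfactor_deg v kHs) finset.setIC => ->.
by move/eqP; rewrite eqn_add2l => /eqP.
Qed.

Lemma card_diff_eq n k (H Hs : {set {set 'I_n}}) :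
  @is_kfactor n k H -> @is_kfactor n k Hs -> #|Hs :\: H| = #|H :\: Hs|.
Proof.
move=> kH kHs; apply/eqP; rewrite -(@eqn_pmul2l 2) //.
rewrite -!handshake; last 2 first.
- exact: fintype.subset_trans (subsetDl H Hs) (kfactor_sub kH).
- exact: fintype.subset_trans (subsetDl Hs H) (kfactor_sub kHs).
by apply/eqP; apply: eq_bigr => v _; exact: (deg_diff_eq kH kHs).
Qed.

Definition KF n k m (Hs : {set {set 'I_n}}) :=
  [set H : {set {set 'I_n}} | @is_kfactor n k H && (#|H :\: Hs| == m)].

Lemma KF_bound n k m (Hs : {set {set 'I_n}}) :
  @is_kfactor n k Hs -> #|KF k m Hs| <= (2 * #|Hs|) ^ m.
Proof.
move=> kHs.
pose D := [set R : {set {set 'I_n}} | R \subset Hs & #|R| == m].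
have fD : forall H, H \in KF k m Hs -> Hs :\: H \in D.
  move=> H; rewrite /KF !inE => /andP[kH /eqP cm].
  by rewrite subsetDl (card_diff_eq kH kHs) cm eqxx.
rewrite (card_fiber fD).
apply: (@leq_trans (\sum_(R in D) bb (2 * m))).
  apply: leq_sum => R; rewrite inE => /andP[sR /eqP cR].
  have sd : (\sum_v deg R v = 2 * m)%N.
    by rewrite handshake ?cR // (fintype.subset_trans sR (kfactor_sub kHs)).
  apply: leq_trans (Sdeg_bound sd).
  have injD : {in [set H in KF k m Hs | Hs :\: H == R] &,
                injective (fun H => H :\: Hs)}.
    move=> H1 H2; rewrite !inE => /andP[_ /eqP e1] /andP[_ /eqP e2] e12.
    rewrite -e2 in e1.
    apply/setP => x; move/setP: e12 => /(_ x); move/setP: e1 => /(_ x); rewrite !inE.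
    by case: (x \in Hs); case: (x \in H1); case: (x \in H2).
  rewrite -(card_in_imset injD); apply: subset_leq_card.
  apply/fintype.subsetP => _ /imsetP [H HS ->]; move: HS; rewrite /KF !inE.
  case/andP => /andP[kH _] /eqP eR.
  apply/andP; split; first exact: fintype.subset_trans (subsetDl H Hs) (kfactor_sub kH).
  by apply/forallP => v; rewrite -eR (deg_diff_eq kH kHs).
by rewrite sum_nat_const cards_draws; exact: bin_bb.
Qed.


Lemma kfactor_card n k (Hs : {set {set 'I_n}}) :
  @is_kfactor n k Hs -> (2 * #|Hs| = k * n)%N.
Proof.
move=> kH; rewrite -handshake ?(kfactor_sub kH) //.
under eq_bigr do rewrite (kfactor_deg _ kH).
by rewrite sum_nat_const card_ord mulnC.
Qed.

Local Open Scope ring_scope.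

Lemma sum_subsets (R : realType) (T : finType) (S : {set T}) (p q : R) :
  \sum_(F : {set T} | F \subset S) p ^+ #|F| * q ^+ (#|S| - #|F|) = (p + q) ^+ #|S|.
Proof.
rewrite addrC exprDn.
rewrite (partition_big (fun F : {set T} => (inord #|F| : 'I_#|S|.+1)) xpredT) //=.
apply: eq_bigr => i _.
rewrite (eq_bigr (fun _ => p ^+ i * q ^+ (#|S| - i))); last first.
  by move=> F /andP[sF /eqP <-]; rewrite inordK // ltnS subset_leq_card.
rewrite (eq_bigl (fun F => F \in [set F : {set T} | F \subset S & #|F| == i])).
  by rewrite sumr_const cards_draws mulrC.
move=> F; rewrite inE; case sF: (F \subset S) => //=.
by rewrite -val_eqE /= inordK // ltnS subset_leq_card.
Qed.

Lemma sum_supsets (R : realType) (T : finType) (S A : {set T}) (p q : R) :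
  A \subset S ->
  \sum_(F : {set T} | (F \subset S) && (A \subset F)) p ^+ #|F| * q ^+ (#|S| - #|F|)
  = p ^+ #|A| * (p + q) ^+ #|S :\: A|.
Proof.
move=> sAS.
rewrite -sum_subsets big_distrr /=.
pose D := [set F' : {set T} | F' \subset S :\: A].
rewrite (eq_bigl (fun F => F \in (fun F' => A :|: F') @: D)); last first.
  move=> F; apply/andP/imsetP.
    case=> sFS sAF; exists (F :\: A); first by rewrite inE finset.setSD.
    apply/setP => x; rewrite !inE; case xA: (x \in A) => //=.
    by rewrite (fintype.subsetP sAF x xA).
  case=> F'; rewrite inE => sF' ->; split; last exact: finset.subsetUl.
  by rewrite finset.subUset sAS (fintype.subset_trans sF' (subsetDl S A)).
rewrite big_imset /=; last first.
  move=> F1 F2; rewrite !inE => s1 s2 /setP e; apply/setP => x; move: (e x).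
  rewrite !inE; case xA: (x \in A) => //=.
  have h : forall F : {set T}, F \subset S :\: A -> (x \in F) = false.
    by move=> F sF; apply/negbTE/negP => /(fintype.subsetP sF); rewrite inE xA.
  by rewrite (h _ s1) (h _ s2).
rewrite [RHS](eq_bigl (fun F => F \in D)); last by move=> F; rewrite inE.
apply: eq_bigr => F; rewrite inE => sF.
have cI : #|A :&: F| = 0%N.
  apply/eqP; rewrite cards_eq0; apply/eqP/setP => x; rewrite !inE.
  apply/negP => /andP[xA xF]; move: (fintype.subsetP sF x xF); rewrite inE xA.
  by [].
rewrite cardsU cI subn0 exprD -mulrA; congr (_ * (_ * _ ^+ _)).
by rewrite cardsD (finset.setIidPr sAS) subnDA.
Qed.

Lemma geo (R : realType) (x c : R) (K : nat) : 1 < x -> 0 <= c ->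
  \sum_(j < K) (if j%:R < c then x ^+ j else 0) <= x / (x - 1) * x `^ c.
Proof.
move=> x1 c0.
have x0 : 0 <= x by lra.
have x10 : 0 < x - 1 by lra.
set J := (Num.truncn c).+1.
have [tc cJ] : ((Num.truncn c)%:R <= c) /\ (c < J%:R).
  by have /andP[] := archimedean.Num.Theory.truncn_itv c0.
pose g j := if (j < J)%N then x ^+ j else 0.
have g0 : forall j, 0 <= g j by move=> j; rewrite /g; case: ifP => // _; rewrite exprn_ge0.
apply: (@le_trans _ _ (\sum_(j < K) g j)).
  apply: ler_sum => j _; rewrite /g; case: ifP => jc.
    have -> : (j < J)%N by rewrite -(ltr_nat R); apply: lt_trans jc cJ.
    by [].
  by case: ifP => // _; rewrite exprn_ge0.
rewrite -(big_mkord xpredT g).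
apply: (@le_trans _ _ (\sum_(0 <= j < K + J) g j)).
  rewrite [X in _ <= X](@big_cat_nat _ _ _ K) ?leq_addr //= lerDl.
  by apply: sumr_ge0 => j _.
rewrite (@big_cat_nat _ _ _ J) ?leq_addl //=.
rewrite [X in _ + X]big_nat_cond [X in _ + X]big1 ?addr0; last first.
  by move=> j /andP[/andP[jJ _] _]; rewrite /g ltnNge jJ.
rewrite big_nat_cond (eq_bigr (fun j => x ^+ j)); last first.
  by move=> j /andP[/andP[_ jJ] _]; rewrite /g jJ.
rewrite -big_nat_cond big_mkord.
rewrite mulrAC ler_pdivlMr // mulrC -subrX1.
have : x ^+ J <= x * x `^ c.
  rewrite /J exprS ler_wpM2l //= -powR_mulrn //.
  by apply: ler_powR => //; lra.
lra.
Qed.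

Lemma loss_small (R : realType) n k (delta : R) (H Hs : {set {set 'I_n}}) :
  (0 < n)%N -> (1 <= k)%N -> @is_kfactor n k H -> @is_kfactor n k Hs ->
  @loss R n k H Hs < 2 * delta / k%:R -> (#|H :\: Hs|)%:R < delta * n%:R / 2.
Proof.
move=> n0 k1 kH kHs.
have cI : #|(H :\: Hs) :&: (Hs :\: H)| = 0%N.
  apply/eqP; rewrite cards_eq0; apply/eqP/setP => e; rewrite !inE.
  by case: (e \in H); case: (e \in Hs).
rewrite /loss cardsU cI subn0 (card_diff_eq kH kHs) addnn -mul2n !natrM.
set m := (#|H :\: Hs|)%:R.
have K0 : 0 < (k%:R : R) by rewrite ltr0n.
have N0 : 0 < (n%:R : R) by rewrite ltr0n.
rewrite ltr_pdivrMr; last by apply: divr_gt0 => //; apply: mulr_gt0.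
have -> : 2 * delta / k%:R * (k%:R * n%:R / 2) = delta * n%:R.
  by field; rewrite pnatr_eq0 -lt0n.
lra.
Qed.

Lemma card_sep (T : finType) (C : {set T}) (P : pred T) :
  #|[set x in C | P x]| = \sum_(x in C) (P x : nat).
Proof.
rewrite -sum1_card [LHS]big_mkcond [RHS]big_mkcond /=.
by apply: eq_bigr => x _; rewrite inE; case: (x \in C); case: (P x).
Qed.

Unset Implicit Arguments.

Theorem mainTheorem8 (R : realType) (k n : nat) (lam eps delta : R)
    (Hs : {set {set 'I_n}}) :
  (1 <= k)%N -> ~~ odd (k * n) ->
  0 <= lam / n%:R <= 1 ->
  0 < eps -> k%:R * lam >= 1 + eps ->
  0 < delta ->
  @is_kfactor n k Hs ->
  @Pr_Gnp R n (lam / n%:R)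
    (fun G0 => #|@Hgood R n k delta Hs (G0 :|: Hs)|%:R
               <= (k%:R * lam) / (k%:R * lam - 1)
                  * (k%:R * lam) `^ (delta * n%:R))
  >= 1 - (k%:R * lam) `^ (- (delta * n%:R / 2)).
Proof.
move=> k1 _ /andP[p0 p1] eps0 hx delta0 kHs.
set x := k%:R * lam.
set p := lam / n%:R.
have x1 : 1 < x by apply: lt_le_trans hx; rewrite ltrDl.
have x0 : 0 < x by lra.
rewrite /Pr_Gnp.
pose w (F : {set {set 'I_n}}) := p ^+ #|F| * (1 - p) ^+ (#|pairs n| - #|F|).
have w0 : forall F, 0 <= w F.
  by move=> F; rewrite /w mulr_ge0 // exprn_ge0 // subr_ge0.
have [n0|npos] := posnP n.
  have -> : delta * n%:R = 0 by rewrite n0 mulr0.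
  rewrite mul0r oppr0 powRr0 subrr.
  by apply: sumr_ge0 => F _; apply: w0.
set t := x / (x - 1) * x `^ (delta * n%:R).
set c := delta * n%:R / 2.
have c0 : 0 <= c by rewrite /c divr_ge0 // mulr_ge0 // ltW.
have tpos : 0 < t by rewrite /t mulr_gt0 ?divr_gt0 ?powR_gt0 //; lra.
pose Xg (F : {set {set 'I_n}}) := (#|@Hgood R n k delta Hs (F :|: Hs)|)%:R : R.
have tot : \sum_(F : {set {set 'I_n}} | F \subset pairs n) w F = 1.
  by rewrite /w sum_subsets addrC subrK expr1n.
have hpr : \sum_(F : {set {set 'I_n}} | (F \subset pairs n) && (Xg F <= t)) w F
    = 1 - \sum_(F : {set {set 'I_n}} | (F \subset pairs n) && ~~ (Xg F <= t)) w F.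
  by rewrite -tot [X in _ = X - _](bigID (fun F => Xg F <= t)) /= addrK.
rewrite [X in _ <= X]hpr lerD2l lerN2.
have step1 : \sum_(F : {set {set 'I_n}} | (F \subset pairs n) && ~~ (Xg F <= t)) w F
    <= \sum_(F : {set {set 'I_n}} | F \subset pairs n) (w F * Xg F / t).
  apply: (@le_trans _ _ (\sum_(F : {set {set 'I_n}} | (F \subset pairs n) && ~~ (Xg F <= t)) (w F * Xg F / t))).
    apply: ler_sum => F /andP[_]; rewrite -ltNge => tX.
    rewrite -mulrA ler_peMr // ler_pdivlMr // mul1r ltW //.
  rewrite [X in _ <= X](bigID (fun F => Xg F <= t)) /= lerDr.
  apply: sumr_ge0 => F _; apply: mulr_ge0; last by rewrite invr_ge0 ltW.
  by apply: mulr_ge0 => //; rewrite /Xg ler0n.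
pose C := [set H : {set {set 'I_n}} |
             @is_kfactor n k H && (@loss R n k H Hs < 2 * delta / k%:R)].
have XE : forall F, Xg F = \sum_(H in C) ((H \subset F :|: Hs) : nat)%:R.
  move=> F; rewrite /Xg -natr_sum -card_sep; congr (_%:R).
  by apply: eq_card => H; rewrite /Hgood !inE andbA.
have EX : \sum_(F : {set {set 'I_n}} | F \subset pairs n) w F * Xg F
          = \sum_(H in C) p ^+ #|H :\: Hs|.
  under eq_bigr do rewrite XE mulr_sumr.
  rewrite exchange_big /=.
  apply: eq_bigr => H; rewrite inE => /andP[kH _].
  have -> : p ^+ #|H :\: Hs|
      = p ^+ #|H :\: Hs| * (p + (1 - p)) ^+ #|pairs n :\: (H :\: Hs)|.
    by rewrite addrC subrK expr1n mulr1.
  rewrite -sum_supsets; last first.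
    exact: fintype.subset_trans (subsetDl H Hs) (kfactor_sub kH).
  rewrite big_mkcondr /=; apply: eq_bigr => F _.
  rewrite finset.setUC -subDset.
  by case: (_ \subset F); rewrite /= ?mulr1n ?mulr0n ?mulr1 ?mulr0.
have ED : \sum_(H in C) p ^+ #|H :\: Hs| <= x / (x - 1) * x `^ c.
  pose N := #|pairs n|.
  have mle : forall H, H \in C -> (#|H :\: Hs| < N.+1)%N.
    move=> H; rewrite inE => /andP[kH _]; rewrite ltnS subset_leq_card //.
    exact: fintype.subset_trans (subsetDl H Hs) (kfactor_sub kH).
  rewrite (partition_big (fun H => (inord #|H :\: Hs| : 'I_N.+1)) xpredT) //=.
  apply: le_trans (@geo R x c N.+1 x1 c0).
  apply: ler_sum => j _.
  rewrite (eq_bigr (fun _ => p ^+ j)); last first.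
    by move=> H /andP[HC /eqP <-]; rewrite inordK // mle.
  rewrite (eq_bigl (fun H => H \in [set H in C | #|H :\: Hs| == j])); last first.
    move=> H; case HC: (H \in C); rewrite inE HC //=.
    by rewrite -val_eqE /= inordK // mle.
  rewrite sumr_const.
  case: ifP => jc.
    have cardle : (#|[set H in C | #|H :\: Hs| == j]| <= (k * n) ^ j)%N.
      rewrite -(kfactor_card kHs); apply: leq_trans (KF_bound j kHs).
      apply: subset_leq_card; apply/fintype.subsetP => H.
      by rewrite /KF !inE => /andP[/andP[-> _] ->].
    rewrite -mulr_natr.
    apply: (@le_trans _ _ (p ^+ j * ((k * n) ^ j)%:R)).
      by rewrite ler_wpM2l ?exprn_ge0 // ler_nat.
    rewrite natrX -exprMn natrM.
    have -> : p * (k%:R * n%:R) = x.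
      rewrite /p /x; field; rewrite pnatr_eq0 -lt0n //.
    by [].
  have -> : #|[set H in C | #|H :\: Hs| == j]| = 0%N.
    apply/eqP; rewrite cards_eq0; apply/eqP/setP => H; rewrite !inE.
    apply/negbTE/negP => /andP[/andP[kH hl] /eqP hj].
    have := loss_small npos k1 kH kHs hl; rewrite hj -/c => jc'.
    by move: jc; rewrite jc'.
  by rewrite mulr0n.
apply: (le_trans step1).
rewrite -mulr_suml EX.
apply: (@le_trans _ _ ((x / (x - 1) * x `^ c) / t)).
  by rewrite ler_pM2r ?invr_gt0.
have xn0 : x != 0 by rewrite gt_eqF.
have yc : 0 < x `^ c by apply: powR_gt0.
have ea : delta * n%:R = c + c by rewrite /c -splitr.
rewrite /t ea powRD ?xn0 ?implybT // powRN.
have a0 : 0 < x / (x - 1) by apply: divr_gt0 => //; lra.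
rewrite le_eqVlt; apply/orP; left; apply/eqP.
field.
by rewrite (gt_eqF yc) (gt_eqF x0) /= ?subr_eq0 ?(gt_eqF x1).
Qed.
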